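(* (a) If $\eta_{ss}$ is smooth and $G$ is the Green function defined by $G_{ss}(s,x)-\lvert\eta_{ss}(s)\rvert^2G(s,x)=-\delta(s-x)$, $G(0,x)=0$, $G_s(1,x)=0$, then $\sup_{0\le s,x\le1}\lvert G_s(s,x)\rvert\le1$ and $\sup_{0<s\le 1,\,0\le x\le1}G(s,x)/s\le1$. (b) Let $n\in\mathbb{N}$, $\eta_1,\dots,\eta_{n+1}\in\mathbb{R}^d$ with $\eta_{n+1}=0$ and $\lvert(\nabla_+\eta)_k\rvert=1$ for $1\le k\le n$, and assume $\alpha_k=\langle(\nabla_+\eta)_{k+1},(\nabla_+\eta)_k\rangle\ge0$ for $1\le k\le n-1$. Let $G_{kj}$ be the discrete Green function $G_{kj}=\frac1n\sum_{i=1}^{\min\{j,k\}}\frac{p_{ij}p_{ik}}{\beta_i}$, $p_{ij}=\prod_{m=i}^{j-1}\frac{\alpha_m}{\beta_{m+1}}$, $\beta_n=1$, $\beta_i=2-\alpha_i^2/\beta_{i+1}$, and set $G_{0j}=0$. Then for all $1\le j,k\le n$: $\lvert n(G_{kj}-G_{k-1,j})\rvert\le1$ and $nG_{kj}/k\le1$.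
   Context: $(\nabla_+f)_k=n(f_{k+1}-f_k)$; empty products equal $1$. $\delta$ is the Dirac delta. *)

(* Defs.v *)
From Stdlib Require Export Reals.
Open Scope R_scope.

Fixpoint sumR (n : nat) (f : nat -> R) : R :=
  match n with O => 0 | S m => sumR m f + f m end.
Fixpoint prodR (n : nat) (f : nat -> R) : R :=
  match n with O => 1 | S m => prodR m f * f m end.

(* vectors of R^d are represented by their coordinate functions nat -> R,
   only the coordinates 0..d-1 matter *)
Definition dotR (d : nat) (u v : nat -> R) : R := sumR d (fun c => u c * v c).
Definition normR (d : nat) (u : nat -> R) : R := sqrt (dotR d u u).

Fixpoint Ck (k : nat) (f : R -> R) : Prop :=
  match k with
  | O => continuity f
  | S k' => exists f' : R -> R, (forall s, derivable_pt_lim f s (f' s)) /\ Ck k' f'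
  end.
Definition smooth (f : R -> R) : Prop := forall k, Ck k f.

(* [is_Green_section q x g a a' b b'] : the function g = G(.,x) is the Green
   function of  g'' - q g = -delta(. - x),  g(0) = 0,  g'(1) = 0  on [0,1]:
   on [0,x] it coincides with a solution a of a'' = q a, on [x,1] with a
   solution b of b'' = q b (a', b' being their derivatives), g(0) = 0, g_s(1) = 0,
   g is continuous at x (a x = b x = g x) and the derivative jumps by -1 at x:
   g_s(x+) - g_s(x-) = b' x - a' x = -1. *)
Definition is_Green_section (q : R -> R) (x : R) (g a a' b b' : R -> R) : Prop :=
  (forall s, derivable_pt_lim a s (a' s)) /\
  (forall s, derivable_pt_lim a' s (q s * a s)) /\
  (forall s, derivable_pt_lim b s (b' s)) /\
  (forall s, derivable_pt_lim b' s (q s * b s)) /\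
  (forall s, 0 <= s <= x -> g s = a s) /\
  (forall s, x <= s <= 1 -> g s = b s) /\
  g 0 = 0 /\ b' 1 = 0 /\
  b' x - a' x = -1.

Definition is_Green (q : R -> R) (G : R -> R -> R) : Prop :=
  forall x, 0 <= x <= 1 ->
    exists a a' b b', is_Green_section q x (fun s => G s x) a a' b b'.

(* eta : nat -> (nat -> R), eta k = eta_k in R^d (coordinates 0..d-1) *)
Definition gradp (n : nat) (eta : nat -> nat -> R) (k : nat) : nat -> R :=
  fun c => INR n * (eta (S k) c - eta k c).

Definition alphaD (d n : nat) (eta : nat -> nat -> R) (k : nat) : R :=
  dotR d (gradp n eta (S k)) (gradp n eta k).

(* betaRev t = beta_{n-t}:  beta_n = 1,  beta_i = 2 - alpha_i^2 / beta_{i+1} *)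
Fixpoint betaRev (n : nat) (alpha : nat -> R) (t : nat) : R :=
  match t with
  | O => 1
  | S t' => 2 - (alpha (n - S t')%nat) ^ 2 / betaRev n alpha t'
  end.
Definition betaD (n : nat) (alpha : nat -> R) (i : nat) : R :=
  betaRev n alpha (n - i).

Definition pD (n : nat) (alpha : nat -> R) (i j : nat) : R :=
  prodR (j - i) (fun t => alpha (i + t)%nat / betaD n alpha (S (i + t))).

Definition GD (n : nat) (alpha : nat -> R) (k j : nat) : R :=
  match k with
  | O => 0
  | _ => / INR n * sumR (Nat.min j k)
           (fun t => pD n alpha (S t) j * pD n alpha (S t) k / betaD n alpha (S t))
  end.

(* Main.v *)
Require Import Defs.
From Stdlib Require Import Reals Lra Lia Psatz.
Open Scope R_scope.

Lemma dmult (f g f' g' : R -> R) :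
  (forall s, derivable_pt_lim f s (f' s)) -> (forall s, derivable_pt_lim g s (g' s)) ->
  forall s, derivable_pt_lim (fun t => f t * g t) s (f' s * g s + f s * g' s).
Proof. intros Hf Hg s. apply (derivable_pt_lim_mult f g); auto. Qed.

Lemma mono (f f' : R -> R) x y : x <= y ->
  (forall c, x <= c <= y -> derivable_pt_lim f c (f' c)) ->
  (forall c, x < c < y -> 0 <= f' c) -> f x <= f y.
Proof.
  intros Hxy Hd Hp. destruct (Req_dec x y) as [->|Hne]; [lra|].
  destruct (MVT_cor2 f f' x y ltac:(lra) Hd) as (c & Hc & Hc2).
  specialize (Hp c Hc2). nra.
Qed.

Lemma monod (f f' : R -> R) x y : x <= y ->
  (forall c, x <= c <= y -> derivable_pt_lim f c (f' c)) ->
  (forall c, x < c < y -> f' c <= 0) -> f y <= f x.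
Proof.
  intros Hxy Hd Hp. destruct (Req_dec x y) as [->|Hne]; [lra|].
  destruct (MVT_cor2 f f' x y ltac:(lra) Hd) as (c & Hc & Hc2).
  specialize (Hp c Hc2). nra.
Qed.

Lemma lip (f f' : R -> R) u v : u <= v ->
  (forall c, u <= c <= v -> derivable_pt_lim f c (f' c)) ->
  (forall c, u < c < v -> Rabs (f' c) <= 1) -> f v - f u <= v - u.
Proof.
  intros Hxy Hd Hp. destruct (Req_dec u v) as [->|Hne]; [lra|].
  destruct (MVT_cor2 f f' u v ltac:(lra) Hd) as (c & Hc & Hc2).
  specialize (Hp c Hc2). rewrite Hc. revert Hp; unfold Rabs; destruct (Rcase_abs (f' c)); intros; nra.
Qed.

Lemma zero_left f x y l : y < x -> derivable_pt_lim f x l ->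
  (forall s, y <= s <= x -> f s = 0) -> l = 0.
Proof.
  intros Hyx Hd Hz. destruct (Req_dec l 0) as [|Hl]; auto. exfalso.
  assert (Hp := Rabs_pos_lt _ Hl).
  destruct (Hd (Rabs l) Hp) as [del Hdel].
  assert (Hm := Rmin_pos del (x - y) (cond_pos del) ltac:(lra)).
  assert (Hm1 := Rmin_l del (x-y)). assert (Hm2 := Rmin_r del (x-y)).
  set (h := - (Rmin del (x-y)) / 2).
  assert (Hh : h < 0) by (unfold h; lra).
  assert (Hah : Rabs h < del) by (rewrite Rabs_left; unfold h; lra).
  specialize (Hdel h ltac:(lra) Hah).
  rewrite (Hz (x+h)) in Hdel by (unfold h; lra).
  rewrite (Hz x) in Hdel by lra.
  replace ((0-0)/h - l) with (-l) in Hdel by (field; lra).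
  rewrite Rabs_Ropp in Hdel. lra.
Qed.

Lemma zero_right f x y l : x < y -> derivable_pt_lim f x l ->
  (forall s, x <= s <= y -> f s = 0) -> l = 0.
Proof.
  intros Hyx Hd Hz. destruct (Req_dec l 0) as [|Hl]; auto. exfalso.
  assert (Hp := Rabs_pos_lt _ Hl).
  destruct (Hd (Rabs l) Hp) as [del Hdel].
  assert (Hm := Rmin_pos del (y - x) (cond_pos del) ltac:(lra)).
  assert (Hm1 := Rmin_l del (y-x)). assert (Hm2 := Rmin_r del (y-x)).
  set (h := (Rmin del (y-x)) / 2).
  assert (Hh : 0 < h) by (unfold h; lra).
  assert (Hah : Rabs h < del) by (rewrite Rabs_right; unfold h; lra).
  specialize (Hdel h ltac:(lra) Hah).
  rewrite (Hz (x+h)) in Hdel by (unfold h; lra).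
  rewrite (Hz x) in Hdel by lra.
  replace ((0-0)/h - l) with (-l) in Hdel by (field; lra).
  rewrite Rabs_Ropp in Hdel. lra.
Qed.

Lemma sq_abs u : u * u <= 1 -> Rabs u <= 1.
Proof. intros H. apply Rabs_le. nra. Qed.

Lemma sectA (q : R -> R) x g a a' b b' :
  (forall s, 0 <= q s) -> 0 <= x <= 1 ->
  is_Green_section q x g a a' b b' ->
  (forall s, 0 <= s <= x -> Rabs (a' s) <= 1) /\
  (forall s, x <= s <= 1 -> Rabs (b' s) <= 1) /\ a 0 = 0 /\ a x = b x.
Proof.
  intros Hq Hx (Ha & Ha' & Hb & Hb' & Hga & Hgb & Hg0 & Hb1 & Hj).
  assert (Ha0 : a 0 = 0) by (rewrite <- Hga by lra; auto).
  assert (Hab : a x = b x) by (rewrite <- Hga, <- Hgb by lra; auto).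
  assert (D1 := dmult a a' a' (fun s => q s * a s) Ha Ha').
  assert (D2 := dmult a' a' (fun s => q s * a s) (fun s => q s * a s) Ha' Ha').
  assert (D3 := dmult a a a' a' Ha Ha).
  assert (E1 := dmult b b' b' (fun s => q s * b s) Hb Hb').
  assert (E2 := dmult b' b' (fun s => q s * b s) (fun s => q s * b s) Hb' Hb').
  assert (E3 := dmult b b b' b' Hb Hb).
  assert (P1 : forall s, 0 <= s -> 0 <= a s * a' s).
  { intros s Hs. replace 0 with (a 0 * a' 0) at 1 by (rewrite Ha0; ring).
    apply (mono _ _ 0 s Hs (fun c _ => D1 c)). intros c _.
    specialize (Hq c). nra. }
  assert (P2 : forall s t, 0 <= s <= t -> a' s * a' s <= a' t * a' t).
  { intros s t Hs. apply (mono _ _ s t ltac:(lra) (fun c _ => D2 c)). intros c Hc.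
    specialize (Hq c). specialize (P1 c ltac:(lra)). nra. }
  assert (P3 : forall s t, 0 <= s <= t -> a s * a s <= a t * a t).
  { intros s t Hs. apply (mono _ _ s t ltac:(lra) (fun c _ => D3 c)). intros c Hc.
    specialize (P1 c ltac:(lra)). nra. }
  assert (Q1 : forall s, s <= 1 -> b s * b' s <= 0).
  { intros s Hs. replace 0 with (b 1 * b' 1) by (rewrite Hb1; ring).
    apply (mono _ _ s 1 Hs (fun c _ => E1 c)). intros c _.
    specialize (Hq c). nra. }
  assert (Q2 : forall s t, s <= t <= 1 -> b' t * b' t <= b' s * b' s).
  { intros s t Hs. apply (monod _ _ s t ltac:(lra) (fun c _ => E2 c)). intros c Hc.
    specialize (Hq c). specialize (Q1 c ltac:(lra)). nra. }
  assert (Q3 : forall s t, s <= t <= 1 -> b t * b t <= b s * b s).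
  { intros s t Hs. apply (monod _ _ s t ltac:(lra) (fun c _ => E3 c)). intros c Hc.
    specialize (Q1 c ltac:(lra)). nra. }
  assert (Key : 0 <= a' x <= 1).
  { specialize (P1 x ltac:(lra)). specialize (Q1 x ltac:(lra)).
    assert (Hb'x : b' x = a' x - 1) by lra.
    rewrite Hb'x, <- Hab in Q1.
    destruct (Rtotal_order (a x) 0) as [Hn|[Hz|Hpos]].
    - nra.
    - assert (Bz : x < 1 -> b' x = 0).
      { intros Hx1. apply (zero_right b x 1 (b' x) Hx1 (Hb x)).
        intros s Hs. specialize (Q3 x s ltac:(lra)). rewrite <- Hab, Hz in Q3. nra. }
      destruct (Req_dec x 0) as [Hx0|Hx0].
      + specialize (Bz ltac:(lra)). lra.
      + assert (Az : a' x = 0).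
        { apply (zero_left a x 0 (a' x) ltac:(lra) (Ha x)).
          intros s Hs. specialize (P3 s x ltac:(lra)). rewrite Hz in P3. nra. }
        destruct (Req_dec x 1) as [Hx1|Hx1].
        * subst x. lra.
        * specialize (Bz ltac:(lra)). lra.
    - nra. }
  split; [|split; [|split; auto]].
  - intros s Hs. apply sq_abs. specialize (P2 s x Hs). nra.
  - intros s Hs. apply sq_abs. specialize (Q2 x s Hs). nra.
Qed.

Lemma partA (q : R -> R) (G : R -> R -> R) :
  (forall s, 0 <= q s) -> is_Green q G ->
  (forall x, 0 <= x <= 1 -> forall a a' b b',
        is_Green_section q x (fun s => G s x) a a' b b' ->
        forall s, 0 <= s <= 1 ->
          (s <= x -> Rabs (a' s) <= 1) /\ (x <= s -> Rabs (b' s) <= 1)) /\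
  (forall s x, 0 < s <= 1 -> 0 <= x <= 1 -> G s x / s <= 1).
Proof.
  intros Hq HG. split.
  - intros x Hx a a' b b' Hs s Hs1.
    destruct (sectA q x _ a a' b b' Hq Hx Hs) as (A1 & A2 & _).
    split; intros; [apply A1|apply A2]; lra.
  - intros s x Hs Hx.
    destruct (HG x Hx) as (a & a' & b & b' & Hsec).
    destruct (sectA q x _ a a' b b' Hq Hx Hsec) as (A1 & A2 & Ha0 & Hab).
    pose proof Hsec as (Ha & Ha' & Hb & Hb' & Hga & Hgb & _).
    assert (Hle : G s x <= s).
    { destruct (Rle_dec s x) as [Hsx|Hsx].
      - rewrite Hga by lra.
        assert (L := lip a a' 0 s ltac:(lra) (fun c _ => Ha c)
          (fun c Hc => A1 c ltac:(lra))). lra.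
      - rewrite Hgb by lra.
        assert (L1 := lip a a' 0 x ltac:(lra) (fun c _ => Ha c)
          (fun c Hc => A1 c ltac:(lra))).
        assert (L2 := lip b b' x s ltac:(lra) (fun c _ => Hb c)
          (fun c Hc => A2 c ltac:(lra))). lra. }
    unfold Rdiv. apply Rmult_le_reg_r with s; [lra|].
    rewrite Rmult_assoc, Rinv_l by lra. lra.
Qed.

Lemma sumR_le n f g : (forall t, (t<n)%nat -> f t <= g t) -> sumR n f <= sumR n g.
Proof. induction n; simpl; intros H; [lra|].
  assert (sumR n f <= sumR n g) by (apply IHn; intros; apply H; lia).
  specialize (H n ltac:(lia)). lra. Qed.
Lemma sumR_ext n f g : (forall t, (t<n)%nat -> f t = g t) -> sumR n f = sumR n g.
Proof. induction n; simpl; intros H; [lra|]. rewrite IHn by (intros; apply H; lia).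
  rewrite H by lia. auto. Qed.
Lemma sumR_scal n c f : sumR n (fun t => c * f t) = c * sumR n f.
Proof. induction n; simpl; [ring|]. rewrite IHn; ring. Qed.
Lemma sumR_nonneg n f : (forall t, (t<n)%nat -> 0 <= f t) -> 0 <= sumR n f.
Proof. intros H. replace 0 with (sumR n (fun _ => 0)).
  apply sumR_le; auto. induction n; simpl; auto. rewrite IHn; [ring|]. intros; apply H; lia. Qed.
Lemma prodR_ext n f g : (forall t, f t = g t) -> prodR n f = prodR n g.
Proof. induction n; simpl; intros H; auto. rewrite IHn, H; auto. Qed.
Lemma prodR_add a b f : prodR (a+b) f = prodR a f * prodR b (fun t => f (a+t)%nat).
Proof. induction b; simpl. rewrite Nat.add_0_r; ring.
  rewrite Nat.add_succ_r. simpl. rewrite IHb. ring. Qed.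

Lemma dot_nonneg d u : 0 <= dotR d u u.
Proof. unfold dotR. apply sumR_nonneg. intros. nra. Qed.
Lemma dot_le d u v : dotR d u v <= (dotR d u u + dotR d v v) / 2.
Proof. unfold dotR. induction d; simpl; [lra|]. pose proof (pow2_ge_0 (u d - v d)). nra. Qed.
Lemma norm1 d u : normR d u = 1 -> dotR d u u = 1.
Proof. unfold normR. intros H. pose proof (sqrt_sqrt _ (dot_nonneg d u)). rewrite H in H0. lra. Qed.

Definition HypA (n : nat) (alpha : nat -> R) := forall m, (1 <= m <= n-1)%nat -> 0 <= alpha m <= 1.

Lemma beta_ge1 n alpha : HypA n alpha -> forall i, (1 <= i <= n)%nat -> 1 <= betaD n alpha i.
Proof.
  intros HA. assert (K : forall t, (t <= n-1)%nat -> 1 <= betaRev n alpha t).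
  { induction t; intros Ht; simpl; [lra|].
    specialize (IHt ltac:(lia)). specialize (HA (n - S t)%nat ltac:(lia)).
    set (a := alpha (n - S t)%nat) in *. set (b := betaRev n alpha t) in *.
    assert (a^2/b <= 1).
    { unfold Rdiv. apply Rmult_le_reg_r with b; [lra|].
      rewrite Rmult_assoc, Rinv_l by lra. nra. }
    lra. }
  intros i Hi. unfold betaD. apply K. lia.
Qed.

Lemma beta_rec n alpha i : (1 <= i <= n-1)%nat ->
  betaD n alpha i = 2 - alpha i ^2 / betaD n alpha (S i).
Proof.
  intros Hi. unfold betaD. replace (n - i)%nat with (S (n - S i)) by lia.
  cbn [betaRev]. replace (n - S (n - S i))%nat with i by lia. reflexivity.
Qed.

Definition rr n alpha m := alpha m / betaD n alpha (S m).

Lemma rr_bounds n alpha m : HypA n alpha -> (1 <= m <= n-1)%nat ->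
  0 <= rr n alpha m <= 1 /\ rr n alpha m * betaD n alpha (S m) = alpha m.
Proof.
  intros HA Hm. pose proof (beta_ge1 n alpha HA (S m) ltac:(lia)).
  specialize (HA m Hm). unfold rr. split; [split|].
  - apply Rmult_le_pos; [lra|]. left; apply Rinv_0_lt_compat; lra.
  - unfold Rdiv. apply Rmult_le_reg_r with (betaD n alpha (S m)); [lra|].
    rewrite Rmult_assoc, Rinv_l by lra. nra.
  - field. lra.
Qed.

Lemma p_bounds n alpha i j : HypA n alpha -> (1 <= i <= j)%nat -> (j <= n)%nat ->
  0 <= pD n alpha i j <= 1.
Proof.
  intros HA Hij Hj. unfold pD. remember (j - i)%nat as d.
  assert (Hd : (i + d <= n)%nat) by lia. clear Heqd Hj.
  induction d; simpl; [lra|].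
  specialize (IHd ltac:(lia)).
  pose proof (rr_bounds n alpha (i+d) HA ltac:(lia)) as [Hr _].
  unfold rr in Hr. nra.
Qed.

Lemma p_refl n alpha i : pD n alpha i i = 1.
Proof. unfold pD. rewrite Nat.sub_diag. reflexivity. Qed.

Lemma p_succ n alpha i j : (i <= j)%nat -> pD n alpha i (S j) = pD n alpha i j * rr n alpha j.
Proof.
  intros H. unfold pD. replace (S j - i)%nat with (S (j - i)) by lia.
  cbn [prodR]. replace (i + (j - i))%nat with j by lia. reflexivity.
Qed.

Lemma p_mul n alpha i m j : (i <= m <= j)%nat -> pD n alpha i j = pD n alpha i m * pD n alpha m j.
Proof.
  intros H. unfold pD. replace (j - i)%nat with ((m - i) + (j - m))%nat by lia.
  rewrite prodR_add. f_equal. apply prodR_ext. intros t.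
  replace (i + (m - i + t))%nat with (m + t)%nat by lia. reflexivity.
Qed.

Definition Sm n alpha m := sumR m (fun t => pD n alpha (S t) m ^ 2 / betaD n alpha (S t)).
Definition HH n alpha k j :=
  sumR (Nat.min j k) (fun t => pD n alpha (S t) j * pD n alpha (S t) k / betaD n alpha (S t)).

Lemma H_le n alpha k j : (k <= j)%nat -> HH n alpha k j = pD n alpha k j * Sm n alpha k.
Proof.
  intros H. unfold HH, Sm. rewrite Nat.min_r by lia. rewrite <- sumR_scal.
  apply sumR_ext. intros t Ht. rewrite (p_mul n alpha (S t) k j) by lia. unfold Rdiv. ring.
Qed.

Lemma H_ge n alpha k j : (j <= k)%nat -> HH n alpha k j = pD n alpha j k * Sm n alpha j.
Proof.
  intros H. unfold HH, Sm. rewrite Nat.min_l by lia. rewrite <- sumR_scal.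
  apply sumR_ext. intros t Ht. rewrite (p_mul n alpha (S t) j k) by lia. unfold Rdiv. ring.
Qed.

Lemma Sm_succ n alpha m :
  Sm n alpha (S m) = rr n alpha m ^ 2 * Sm n alpha m + 1 / betaD n alpha (S m).
Proof.
  unfold Sm. cbn [sumR]. rewrite p_refl. rewrite <- sumR_scal.
  match goal with |- ?A + ?B = ?C + ?D => assert (E: A = C); [|rewrite E; unfold Rdiv; ring] end. apply sumR_ext. intros t Ht.
  rewrite p_succ by lia. unfold Rdiv. ring.
Qed.

Lemma Sm_nonneg n alpha m : HypA n alpha -> (m <= n)%nat -> 0 <= Sm n alpha m.
Proof.
  intros HA Hm. unfold Sm. apply sumR_nonneg. intros t Ht.
  pose proof (beta_ge1 n alpha HA (S t) ltac:(lia)).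
  apply Rmult_le_pos; [nra|]. left; apply Rinv_0_lt_compat; lra.
Qed.

Lemma Sm_one n alpha : Sm n alpha 1 = 1 / betaD n alpha 1.
Proof. rewrite Sm_succ. unfold Sm. simpl. ring. Qed.

Lemma invI n alpha : HypA n alpha -> forall m, (1 <= m <= n-1)%nat ->
  Sm n alpha m * (1 - rr n alpha m) <= 1.
Proof.
  intros HA m. induction m; intros Hm; [lia|].
  destruct m.
  - rewrite Sm_one. pose proof (beta_ge1 n alpha HA 1 ltac:(lia)).
    pose proof (rr_bounds n alpha 1 HA Hm) as [Hr _].
    assert (0 < 1 / betaD n alpha 1 <= 1).
    { split. apply Rdiv_lt_0_compat; lra.
      unfold Rdiv. apply Rmult_le_reg_r with (betaD n alpha 1); [lra|].
      rewrite Rmult_assoc, Rinv_l by lra. lra. }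
    nra.
  - specialize (IHm ltac:(lia)). rewrite Sm_succ.
    pose proof (Sm_nonneg n alpha (S m) HA ltac:(lia)) as HS.
    pose proof (rr_bounds n alpha (S m) HA ltac:(lia)) as [Hx Hxb].
    pose proof (rr_bounds n alpha (S (S m)) HA ltac:(lia)) as [Hy Hyb].
    pose proof (beta_ge1 n alpha HA (S (S m)) ltac:(lia)) as Hb.
    pose proof (HA (S m) ltac:(lia)) as Ha1.
    pose proof (HA (S (S m)) ltac:(lia)) as Ha2.
    pose proof (beta_rec n alpha (S (S m)) ltac:(lia)) as Hbr.
    set (S0 := Sm n alpha (S m)) in *.
    set (x := rr n alpha (S m)) in *. set (y := rr n alpha (S (S m))) in *.
    set (b := betaD n alpha (S (S m))) in *.
    set (b' := betaD n alpha (S (S (S m)))) in *.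
    set (a2 := alpha (S (S m))) in *.
    assert (Hb2 : b = 2 - a2 * y).
    { rewrite Hbr. unfold y, rr, a2, b'. unfold Rdiv. ring. }
    assert (H1y : 1 - y <= b - 1) by nra.
    assert (A : x^2 * S0 * (1-y) * b <= 1).
    { assert (x^2*S0*(1-y)*b <= x^2*S0*(b-1)*b).
      { assert (0 <= x^2*S0*b) by (apply Rmult_le_pos; [apply Rmult_le_pos|]; nra).
        nra. }
      assert (x^2*S0*(b-1)*b <= x*S0*(b-1)).
      { assert (0 <= x*S0*(b-1)) by (apply Rmult_le_pos; [apply Rmult_le_pos|]; nra).
        replace (x^2*S0*(b-1)*b) with ((x*b) * (x*S0*(b-1))) by ring. nra. }
      assert (x*S0*(b-1) <= S0*(1-x)) by nra.
      lra. }
    assert (B : x^2 * S0 * (1-y) * b + (1 - y) <= b) by lra.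
    replace ((x ^ 2 * S0 + 1 / b) * (1 - y)) with ((x^2*S0*(1-y)*b + (1-y)) * / b)
      by (field; lra).
    apply Rmult_le_reg_r with b; [lra|]. rewrite Rmult_assoc, Rinv_l by lra. lra.
Qed.

Lemma invJ n alpha : HypA n alpha -> forall m, (1 <= m <= n-1)%nat ->
  rr n alpha m * Sm n alpha m <= Sm n alpha (S m).
Proof.
  intros HA m Hm. rewrite Sm_succ.
  pose proof (invI n alpha HA m Hm) as HI.
  pose proof (Sm_nonneg n alpha m HA ltac:(lia)) as HS.
  pose proof (rr_bounds n alpha m HA Hm) as [Hx Hxb].
  pose proof (beta_ge1 n alpha HA (S m) ltac:(lia)) as Hb.
  pose proof (HA m Hm) as Ha.
  set (S0 := Sm n alpha m) in *. set (x := rr n alpha m) in *.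
  set (b := betaD n alpha (S m)) in *.
  assert (x*(1-x)*S0*b <= 1).
  { replace (x*(1-x)*S0*b) with ((x*b)*(S0*(1-x))) by ring. rewrite Hxb.
    assert (0 <= S0*(1-x)) by nra. nra. }
  assert (x*(1-x)*S0 <= 1/b).
  { unfold Rdiv. apply Rmult_le_reg_r with b; [lra|].
    replace (1 * /b * b) with 1 by (field; lra). lra. }
  nra.
Qed.

Lemma pS_le n alpha : HypA n alpha -> forall j d, (1 <= j)%nat -> (j + d <= n)%nat ->
  pD n alpha j (j+d) * Sm n alpha j <= Sm n alpha (j+d).
Proof.
  intros HA j d Hj. induction d; intros Hd.
  - rewrite Nat.add_0_r, p_refl. lra.
  - rewrite Nat.add_succ_r, p_succ by lia. specialize (IHd ltac:(lia)).
    pose proof (invJ n alpha HA (j+d) ltac:(lia)).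
    pose proof (rr_bounds n alpha (j+d) HA ltac:(lia)) as [Hr _]. nra.
Qed.

Lemma H0 n alpha j : HH n alpha 0 j = 0.
Proof. unfold HH. rewrite Nat.min_0_r. reflexivity. Qed.

Lemma diffB n alpha : HypA n alpha -> forall j k, (1 <= j <= n)%nat -> (1 <= k <= n)%nat ->
  Rabs (HH n alpha k j - HH n alpha (k-1) j) <= 1.
Proof.
  intros HA j k Hj Hk. apply Rabs_le.
  destruct (Nat.le_gt_cases k j) as [Hkj|Hkj].
  - destruct (Nat.eq_dec k 1) as [->|Hk1].
    + simpl (1-1)%nat. rewrite H0, H_le by lia. rewrite Sm_one.
      pose proof (beta_ge1 n alpha HA 1 ltac:(lia)).
      pose proof (p_bounds n alpha 1 j HA ltac:(lia) ltac:(lia)).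
      assert (0 < 1 / betaD n alpha 1 <= 1).
      { split. apply Rdiv_lt_0_compat; lra.
        unfold Rdiv. apply Rmult_le_reg_r with (betaD n alpha 1); [lra|].
        rewrite Rmult_assoc, Rinv_l by lra. lra. }
      nra.
    + rewrite !H_le by lia.
      destruct k as [|k]; [lia|]. replace (S k - 1)%nat with k by lia.
      rewrite (p_mul n alpha k (S k) j) by lia. rewrite p_succ, p_refl by lia.
      rewrite Sm_succ.
      pose proof (invI n alpha HA k ltac:(lia)) as HI.
      pose proof (Sm_nonneg n alpha k HA ltac:(lia)) as HS.
      pose proof (rr_bounds n alpha k HA ltac:(lia)) as [Hx _].
      pose proof (beta_ge1 n alpha HA (S k) ltac:(lia)) as Hb.
      pose proof (p_bounds n alpha (S k) j HA ltac:(lia) ltac:(lia)) as Hp.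
      assert (0 < 1 / betaD n alpha (S k) <= 1).
      { split. apply Rdiv_lt_0_compat; lra.
        unfold Rdiv. apply Rmult_le_reg_r with (betaD n alpha (S k)); [lra|].
        rewrite Rmult_assoc, Rinv_l by lra. lra. }
      set (S0 := Sm n alpha k) in *. set (x := rr n alpha k) in *.
      set (p := pD n alpha (S k) j) in *. set (ib := 1 / betaD n alpha (S k)) in *.
      assert (0 <= x*(1-x)*S0 <= 1).
      { split. apply Rmult_le_pos; [|lra]. apply Rmult_le_pos; lra.
        replace (x*(1-x)*S0) with (x*(S0*(1-x))) by ring.
        assert (0 <= S0*(1-x)) by nra. nra. }
      replace (p * ((x^2*S0 + ib)) - 1*x*p*S0) with (p * (ib - x*(1-x)*S0)) by ring.
      split; nra.
  - destruct k as [|k]; [lia|]. replace (S k - 1)%nat with k by lia.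
    rewrite !H_ge by lia. rewrite p_succ by lia.
    pose proof (pS_le n alpha HA j (k - j) ltac:(lia) ltac:(lia)) as Hpl.
    replace (j + (k - j))%nat with k in Hpl by lia.
    pose proof (invI n alpha HA k ltac:(lia)) as HI.
    pose proof (Sm_nonneg n alpha j HA ltac:(lia)) as HSj.
    pose proof (Sm_nonneg n alpha k HA ltac:(lia)) as HSk.
    pose proof (rr_bounds n alpha k HA ltac:(lia)) as [Hx _].
    pose proof (p_bounds n alpha j k HA ltac:(lia) ltac:(lia)) as Hp.
    set (x := rr n alpha k) in *. set (p := pD n alpha j k) in *.
    assert (0 <= p * Sm n alpha j) by nra.
    assert (p * Sm n alpha j * (1 - x) <= Sm n alpha k * (1-x)) by nra.
    split; nra.
Qed.

Lemma Hk_le n alpha : HypA n alpha -> forall j k, (1 <= j <= n)%nat -> (k <= n)%nat ->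
  HH n alpha k j <= INR k.
Proof.
  intros HA j k Hj. induction k; intros Hk.
  - rewrite H0. simpl. lra.
  - pose proof (diffB n alpha HA j (S k) Hj ltac:(lia)).
    replace (S k - 1)%nat with k in H by lia. revert H; unfold Rabs; destruct (Rcase_abs _); intros H.
    all: rewrite S_INR; specialize (IHk ltac:(lia)); lra.
Qed.

Lemma GD_HH n alpha k j : (1 <= n)%nat -> INR n * GD n alpha k j = HH n alpha k j.
Proof.
  intros Hn. destruct k as [|k].
  - rewrite H0. simpl. ring.
  - unfold GD, HH. rewrite <- Rmult_assoc, Rinv_r, Rmult_1_l; auto.
    apply not_0_INR. lia.
Qed.

Theorem proposition3p3 :
  (* (a) *)
  (forall (d : nat) (eta eta1 eta2 : nat -> R -> R) (G : R -> R -> R),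
     (forall c s, (c < d)%nat -> derivable_pt_lim (eta c) s (eta1 c s)) ->
     (forall c s, (c < d)%nat -> derivable_pt_lim (eta1 c) s (eta2 c s)) ->
     (forall c, (c < d)%nat -> smooth (eta2 c)) ->
     let q := fun s => (normR d (fun c => eta2 c s)) ^ 2 in
     is_Green q G ->
     (forall x, 0 <= x <= 1 -> forall a a' b b',
        is_Green_section q x (fun s => G s x) a a' b b' ->
        forall s, 0 <= s <= 1 ->
          (s <= x -> Rabs (a' s) <= 1) /\ (x <= s -> Rabs (b' s) <= 1)) /\
     (forall s x, 0 < s <= 1 -> 0 <= x <= 1 -> G s x / s <= 1)) /\
  (* (b) *)
  (forall (d n : nat) (eta : nat -> nat -> R),
     (forall c, (c < d)%nat -> eta (S n) c = 0) ->
     (forall k, (1 <= k <= n)%nat -> normR d (gradp n eta k) = 1) ->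
     (forall k, (1 <= k <= n - 1)%nat -> 0 <= alphaD d n eta k) ->
     forall j k, (1 <= j <= n)%nat -> (1 <= k <= n)%nat ->
       Rabs (INR n * (GD n (alphaD d n eta) k j - GD n (alphaD d n eta) (k - 1) j)) <= 1 /\
       INR n * GD n (alphaD d n eta) k j / INR k <= 1).
Proof.
  split.
  - intros d eta eta1 eta2 G _ _ _ q HG. apply partA; auto.
    intros s. unfold q. apply pow2_ge_0.
  - intros d n eta _ Hnorm Hpos j k Hj Hk.
    assert (HA : HypA n (alphaD d n eta)).
    { intros m Hm. split; [apply Hpos; auto|].
      unfold alphaD. eapply Rle_trans; [apply dot_le|].
      rewrite !norm1 by (apply Hnorm; lia). lra. }
    rewrite Rmult_minus_distr_l, !GD_HH by lia. split.
    + apply diffB; auto.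
    + pose proof (Hk_le n _ HA j k Hj ltac:(lia)).
      assert (0 < INR k) by (apply lt_0_INR; lia).
      unfold Rdiv. apply Rmult_le_reg_r with (INR k); [lra|].
      replace (HH n (alphaD d n eta) k j * / INR k * INR k) with (HH n (alphaD d n eta) k j)
        by (field; lra). lra.
Qed.
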